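(* Let $U$ be a subgroup of $\mathbf{T}/\{\pm1\}$ with at least three elements. Then $R(U)$ is a subring of $\mathbb{C}$ (closed under addition, negation and multiplication, and containing $0$ and $1$). Moreover, $R(U)$ is exactly the set of finite $\mathbb{Z}$-linear combinations of finite products of complex numbers of the form $$\frac{1-u^2}{1-v^2},$$ where $u,v\in\mathbf{T}$ are representatives of elements of $U$ and $v^2\neq 1$. (The value $u^2$ does not depend on the choice of representative.) Equivalently, setting $V=\{u^2: u\in\mathbf{T} \text{ represents an element of } U\}\subset\mathbf{T}$, $R(U)$ is the set of finite $\mathbb{Z}$-linear combinations of finite products of numbers $\frac{1-a}{1-b}$ with $a,b\in V$, $b\neq 1$.
   Context: Let $\mathbf{T}=\{z\in\mathbb{C}:|z|=1\}$. An angle is an element of the quotient group $\mathbf{T}/\{\pm1\}$; in formulas an angle is represented by either of its two representatives $u\in\mathbf{T}$. For $p\in\mathbb{C}$ and an angle $u$, let $L_u(p)=\{p+ru: r\in\mathbb{R}\}$ (the line through $p$ with direction $u$). For distinct angles $u,v$ and $p,q\in\mathbb{C}$, $I_{u,v}(p,q)$ denotes the unique point of $L_u(p)\cap L_v(q)$. For a subgroup $U$ of $\mathbf{T}/\{\pm1\}$, $R(U)$ denotes the smallest subset of $\mathbb{C}$ that contains $0$ and $1$ and such that $I_{u,v}(p,q)\in R(U)$ whenever $p,q\in R(U)$ and $u,v$ are distinct elements of $U$. *)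

(* Defs.v *)
From Stdlib Require Import Reals.
Open Scope R_scope.

Record Cx := mkC { Re : R; Im : R }.

Definition C0 : Cx := mkC 0 0.
Definition C1 : Cx := mkC 1 0.
Definition Cadd (z w : Cx) : Cx := mkC (Re z + Re w) (Im z + Im w).
Definition Copp (z : Cx) : Cx := mkC (- Re z) (- Im z).
Definition Csub (z w : Cx) : Cx := Cadd z (Copp w).
Definition Cmul (z w : Cx) : Cx :=
  mkC (Re z * Re w - Im z * Im w) (Re z * Im w + Im z * Re w).
Definition Cinv (z : Cx) : Cx :=
  let n := Re z * Re z + Im z * Im z in mkC (Re z / n) (- Im z / n).
Definition Cdiv (z w : Cx) : Cx := Cmul z (Cinv w).
Definition RtoC (r : R) : Cx := mkC r 0.
Definition Cconj (z : Cx) : Cx := mkC (Re z) (- Im z).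

Definition on_T (z : Cx) : Prop := Re z * Re z + Im z * Im z = 1.

(* A subgroup of T/{+-1}, represented by its full preimage in T:
   a set of unit complex numbers containing 1 and -1, closed under
   products and inverses (inverse on T = conjugate). *)
Definition angle_subgroup (U : Cx -> Prop) : Prop :=
  (forall u, U u -> on_T u) /\
  U C1 /\
  U (Copp C1) /\
  (forall u v, U u -> U v -> U (Cmul u v)) /\
  (forall u, U u -> U (Cconj u)).

Definition distinct_angles (u v : Cx) : Prop := u <> v /\ u <> Copp v.

Definition at_least_three_angles (U : Cx -> Prop) : Prop :=
  exists u1 u2 u3, U u1 /\ U u2 /\ U u3 /\
    distinct_angles u1 u2 /\ distinct_angles u1 u3 /\ distinct_angles u2 u3.

Definition on_line (u p z : Cx) : Prop := exists r : R, z = Cadd p (Cmul (RtoC r) u).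

Inductive RU (U : Cx -> Prop) : Cx -> Prop :=
  | RU_0 : RU U C0
  | RU_1 : RU U C1
  | RU_I : forall p q u v z, RU U p -> RU U q -> U u -> U v ->
      distinct_angles u v -> on_line u p z -> on_line v q z -> RU U z.

Definition generator (U : Cx -> Prop) (z : Cx) : Prop :=
  exists u v, U u /\ U v /\ Cmul v v <> C1 /\
    z = Cdiv (Csub C1 (Cmul u u)) (Csub C1 (Cmul v v)).

Inductive gen_prod (U : Cx -> Prop) : Cx -> Prop :=
  | gp_one : gen_prod U C1
  | gp_mul : forall x g, gen_prod U x -> generator U g -> gen_prod U (Cmul x g).

Inductive Zspan_prod (U : Cx -> Prop) : Cx -> Prop :=
  | zs_zero : Zspan_prod U C0
  | zs_add : forall x p, Zspan_prod U x -> gen_prod U p -> Zspan_prod U (Cadd x p)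
  | zs_sub : forall x p, Zspan_prod U x -> gen_prod U p -> Zspan_prod U (Csub x p).

(* Main.v *)
From Stdlib Require Import Reals Lra Field Classical.
Require Import Defs.

Lemma Cx_eq (z w : Cx) : Re z = Re w -> Im z = Im w -> z = w.
Proof. destruct z, w; simpl; intros; subst; reflexivity. Qed.

Ltac cxr := intros; repeat match goal with z : Cx |- _ => destruct z end;
  apply Cx_eq; simpl; ring.

Lemma Cring : ring_theory C0 C1 Cadd Cmul Csub Copp (@eq Cx).
Proof. constructor; cxr. Qed.

Lemma C10 : C1 <> C0.
Proof. intro H. injection H. lra. Qed.

Lemma Cinv_l (p : Cx) : p <> C0 -> Cmul (Cinv p) p = C1.
Proof.
  destruct p as [x y]; intro Hp.
  assert (Hn : x * x + y * y <> 0).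
  { intro Hn. apply Hp. assert (x = 0) by nra. assert (y = 0) by nra. subst. reflexivity. }
  apply Cx_eq; unfold Cinv, Cmul; simpl; field; auto.
Qed.

Lemma Cfield : field_theory C0 C1 Cadd Cmul Csub Copp Cdiv Cinv (@eq Cx).
Proof.
  constructor.
  - exact Cring.
  - exact C10.
  - reflexivity.
  - exact Cinv_l.
Qed.

Add Field Cfield_inst : Cfield.

Lemma Cconj_add x y : Cconj (Cadd x y) = Cadd (Cconj x) (Cconj y). Proof. cxr. Qed.
Lemma Cconj_sub x y : Cconj (Csub x y) = Csub (Cconj x) (Cconj y). Proof. cxr. Qed.
Lemma Cconj_opp x : Cconj (Copp x) = Copp (Cconj x). Proof. cxr. Qed.
Lemma Cconj_mul x y : Cconj (Cmul x y) = Cmul (Cconj x) (Cconj y). Proof. cxr. Qed.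
Lemma Cconj_C0 : Cconj C0 = C0. Proof. apply Cx_eq; simpl; ring. Qed.
Lemma Cconj_C1 : Cconj C1 = C1. Proof. apply Cx_eq; simpl; ring. Qed.
Lemma Cconj_conj x : Cconj (Cconj x) = x. Proof. cxr. Qed.
Lemma Cconj_inv x : Cconj (Cinv x) = Cinv (Cconj x).
Proof. destruct x as [a b]; apply Cx_eq; unfold Cinv, Cconj; simpl.
  - replace (a * a + - b * - b) with (a*a+b*b) by ring. reflexivity.
  - replace (a * a + - b * - b) with (a*a+b*b) by ring. unfold Rdiv. ring. Qed.
Lemma Cconj_div x y : Cconj (Cdiv x y) = Cdiv (Cconj x) (Cconj y).
Proof. unfold Cdiv. rewrite Cconj_mul, Cconj_inv. reflexivity. Qed.
Lemma Cconj_RtoC r : Cconj (RtoC r) = RtoC r. Proof. apply Cx_eq; simpl; ring. Qed.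

Hint Rewrite Cconj_add Cconj_sub Cconj_opp Cconj_mul Cconj_C0 Cconj_C1 Cconj_conj
  Cconj_inv Cconj_div Cconj_RtoC : cconj.

Lemma onT_conj u : on_T u -> Cconj u = Cinv u.
Proof. unfold on_T; destruct u as [a b]; simpl; intro H. apply Cx_eq; unfold Cinv; simpl; rewrite H; field. Qed.

Lemma onT_nz u : on_T u -> u <> C0.
Proof. unfold on_T; intros H E; subst; simpl in H; lra. Qed.

Lemma Cmul_integral x y : Cmul x y = C0 -> x = C0 \/ y = C0.
Proof. intro H. destruct (classic (x = C0)) as [|Hx]; [auto|right].
  replace y with (Cmul (Cinv x) (Cmul x y)) by (field; auto). rewrite H. ring. Qed.

Lemma real_RtoC t : Cconj t = t -> t = RtoC (Re t).
Proof. destruct t as [a b]; unfold Cconj, RtoC; simpl; intro H; injection H; intro.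
  apply Cx_eq; simpl; lra. Qed.

Lemma on_line_of u p z : on_T u ->
  Csub z p = Cmul (Cmul u u) (Csub (Cconj z) (Cconj p)) -> on_line u p z.
Proof.
  intros Hu H. pose proof (onT_nz _ Hu) as Hu0.
  set (w := Csub z p) in *.
  assert (Hw : Cconj w = Cdiv w (Cmul u u)).
  { unfold w in *. rewrite Cconj_sub. rewrite H. field. auto. }
  set (t := Cmul w (Cconj u)).
  assert (Ht : Cconj t = t).
  { unfold t. rewrite Cconj_mul, Cconj_conj, Hw, (onT_conj _ Hu). field. auto. }
  exists (Re t). rewrite <- (real_RtoC _ Ht). unfold t. rewrite (onT_conj _ Hu).
  replace z with (Cadd p w) at 1 by (unfold w; ring). field. auto.
Qed.

Lemma line_eq u p z : on_T u -> on_line u p z ->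
  Csub z p = Cmul (Cmul u u) (Csub (Cconj z) (Cconj p)).
Proof.
  intros Hu [r Hr]. pose proof (onT_nz _ Hu). subst z.
  autorewrite with cconj. rewrite (onT_conj _ Hu). field. auto.
Qed.

Declare Scope cx_scope. Delimit Scope cx_scope with cx.
Infix "+" := Cadd : cx_scope. Infix "*" := Cmul : cx_scope.
Infix "-" := Csub : cx_scope. Notation "- x" := (Copp x) : cx_scope.
Infix "/" := Cdiv : cx_scope. Notation "/ x" := (Cinv x) : cx_scope.
Local Open Scope cx_scope.

Lemma Csub_nz x y : x <> y -> x - y <> C0.
Proof. intros H E; apply H. replace x with ((x - y) + y) by ring. rewrite E; ring. Qed.

Section WithU.
Variable U : Cx -> Prop.
Hypothesis HU : angle_subgroup U.

Lemma U_T u : U u -> on_T u. Proof. destruct HU as [H _]; auto. Qed.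
Lemma U_1 : U C1. Proof. destruct HU as [_ [H _]]; auto. Qed.
Lemma U_mul u v : U u -> U v -> U (u * v). Proof. destruct HU as [_ [_ [_ [H _]]]]; auto. Qed.
Lemma U_conj u : U u -> U (Cconj u). Proof. destruct HU as [_ [_ [_ [_ H]]]]; auto. Qed.
Lemma U_cj u : U u -> Cconj u = / u. Proof. intro; apply onT_conj, U_T; auto. Qed.
Lemma U_nz u : U u -> u <> C0. Proof. intro; apply onT_nz, U_T; auto. Qed.
Lemma U_inv u : U u -> U (/ u). Proof. intro H. rewrite <- (U_cj _ H). apply U_conj; auto. Qed.

Lemma dist_of_sq u v : U u -> U v -> u * u <> v * v -> distinct_angles u v.
Proof. intros _ _ H; split; intro E; apply H; rewrite E; ring. Qed.

Lemma sq_of_dist u v : distinct_angles u v -> u * u <> v * v.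
Proof. intros [H1 H2] E.
  assert (E' : (u - v) * (u + v) = C0) by (replace C0 with (u*u - v*v) by (rewrite E; ring); ring).
  destruct (Cmul_integral _ _ E') as [F|F].
  - apply H1. replace u with ((u - v) + v) by ring. rewrite F; ring.
  - apply H2. replace u with ((u + v) - v) by ring. rewrite F; ring.
Qed.

Lemma RU_I' u v p q z : U u -> U v -> u * u <> v * v -> RU U p -> RU U q ->
  z - p = (u * u) * (Cconj z - Cconj p) -> z - q = (v * v) * (Cconj z - Cconj q) -> RU U z.
Proof.
  intros Hu Hv Hd Hp Hq E1 E2.
  apply (RU_I U p q u v z Hp Hq Hu Hv (dist_of_sq _ _ Hu Hv Hd));
  apply on_line_of; auto; apply U_T; auto.
Qed.

Lemma sq_cj u : U u -> Cconj (u * u) = / (u * u).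
Proof. intro H. rewrite Cconj_mul, (U_cj _ H). field. apply U_nz; auto. Qed.
Lemma sq_nz u : U u -> u * u <> C0.
Proof. intros H E. destruct (Cmul_integral _ _ E); eapply U_nz; eauto. Qed.

Lemma RU_I2 u v a b p q z : U u -> U v -> a = u * u -> b = v * v -> a <> b -> RU U p -> RU U q ->
  z - p = a * (Cconj z - Cconj p) -> z - q = b * (Cconj z - Cconj q) -> RU U z.
Proof. intros; subst; eapply (RU_I' u v p q); eauto. Qed.

Ltac fld := field; repeat split; first [assumption | apply U_nz; assumption].
Ltac cj H := autorewrite with cconj; rewrite ?H.
Ltac prep ua ub uc Ha Hb Hc Dab Dac Dbc a b c Ea Eb Ec Ca Cb Cc :=
  pose proof (sq_cj _ Ha) as Ca; pose proof (sq_cj _ Hb) as Cb; pose proof (sq_cj _ Hc) as Cc;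
  pose proof (sq_nz _ Ha); pose proof (sq_nz _ Hb); pose proof (sq_nz _ Hc);
  pose proof (Csub_nz _ _ Dab); pose proof (Csub_nz _ _ Dac); pose proof (Csub_nz _ _ Dbc);
  pose proof (Csub_nz _ _ (not_eq_sym Dab)); pose proof (Csub_nz _ _ (not_eq_sym Dac));
  pose proof (Csub_nz _ _ (not_eq_sym Dbc));
  set (a := ua * ua) in *; set (b := ub * ub) in *; set (c := uc * uc) in *;
  assert (Ea : a = ua * ua) by reflexivity; assert (Eb : b = ub * ub) by reflexivity;
  assert (Ec : c = uc * uc) by reflexivity; clearbody a b c.

Lemma axis_add ua ub uc s s' : U ua -> U ub -> U uc ->
  ua * ua <> ub * ub -> ua * ua <> uc * uc -> ub * ub <> uc * uc ->
  RU U s -> RU U s' -> Cconj s = s / (ua * ua) -> Cconj s' = s' / (ua * ua) ->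
  RU U (s + s').
Proof.
  intros Ha Hb Hc Dab Dac Dbc Hs Hs' Cs Cs'.
  prep ua ub uc Ha Hb Hc Dab Dac Dbc a b c Ea Eb Ec Ca Cb Cc.
  set (m := c * (a - b) / (a * (c - b))).
  assert (R1 : RU U (s' * m)).
  { apply (RU_I2 uc ub c b C0 s' (s'*m) Hc Hb Ec Eb (not_eq_sym Dbc) (RU_0 U) Hs');
    unfold m; cj Cs'; rewrite ?Ca, ?Cb, ?Cc; fld. }
  assert (R2 : RU U (s + s' * m)).
  { apply (RU_I2 uc ua c a s (s'*m) _ Hc Ha Ec Ea (not_eq_sym Dac) Hs R1);
    unfold m; cj Cs'; rewrite ?Cs, ?Ca, ?Cb, ?Cc; fld. }
  apply (RU_I2 ub ua b a (s + s'*m) C0 _ Hb Ha Eb Ea (not_eq_sym Dab) R2 (RU_0 U));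
    unfold m; cj Cs'; rewrite ?Cs, ?Ca, ?Cb, ?Cc; fld.
Qed.

Lemma axis_opp ua ub uc s : U ua -> U ub -> U uc ->
  ua * ua <> ub * ub -> ua * ua <> uc * uc -> ub * ub <> uc * uc ->
  RU U s -> Cconj s = s / (ua * ua) -> RU U (- s).
Proof.
  intros Ha Hb Hc Dab Dac Dbc Hs Cs.
  prep ua ub uc Ha Hb Hc Dab Dac Dbc a b c Ea Eb Ec Ca Cb Cc.
  set (m := c * (a - b) / (a * (c - b))).
  assert (R1 : RU U (s * (C1 - m))).
  { apply (RU_I2 ub uc b c C0 s _ Hb Hc Eb Ec Dbc (RU_0 U) Hs);
    unfold m; cj Cs; rewrite ?Ca, ?Cb, ?Cc; fld. }
  assert (R2 : RU U (- (s * m))).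
  { apply (RU_I2 uc ua c a C0 (s * (C1 - m)) _ Hc Ha Ec Ea (not_eq_sym Dac) (RU_0 U) R1);
    unfold m; cj Cs; rewrite ?Ca, ?Cb, ?Cc; fld. }
  apply (RU_I2 ub ua b a (- (s * m)) C0 _ Hb Ha Eb Ea (not_eq_sym Dab) R2 (RU_0 U));
    unfold m; cj Cs; rewrite ?Ca, ?Cb, ?Cc; fld.
Qed.

Lemma axis_comb ua ub r t : U ua -> U ub -> ua * ua <> ub * ub ->
  RU U r -> RU U t -> Cconj r = r / (ua * ua) -> Cconj t = t / (ub * ub) -> RU U (r + t).
Proof.
  intros Ha Hb Dab Hr Ht Cr Ct.
  pose proof (sq_nz _ Ha). pose proof (sq_nz _ Hb).
  apply (RU_I2 ub ua (ub*ub) (ua*ua) r t _ Hb Ha eq_refl eq_refl (not_eq_sym Dab) Hr Ht);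
  cj Cr; rewrite Ct; fld.
Qed.

Definition proj a b x := a * (x - b * Cconj x) / (a - b).

Lemma proj_RU ua ub x : U ua -> U ub -> ua * ua <> ub * ub -> RU U x ->
  RU U (proj (ua * ua) (ub * ub) x).
Proof.
  intros Ha Hb Dab Hx.
  pose proof (sq_nz _ Ha). pose proof (sq_nz _ Hb). pose proof (sq_cj _ Ha). pose proof (sq_cj _ Hb).
  pose proof (Csub_nz _ _ Dab). pose proof (Csub_nz _ _ (not_eq_sym Dab)).
  apply (RU_I2 ua ub (ua*ua) (ub*ub) C0 x _ Ha Hb eq_refl eq_refl Dab (RU_0 U) Hx);
  unfold proj; autorewrite with cconj; rewrite (U_cj _ Ha), (U_cj _ Hb); fld.
Qed.

Lemma proj_axis ua ub x : U ua -> U ub -> ua * ua <> ub * ub ->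
  Cconj (proj (ua * ua) (ub * ub) x) = proj (ua * ua) (ub * ub) x / (ua * ua).
Proof.
  intros Ha Hb Dab.
  pose proof (sq_nz _ Ha). pose proof (sq_nz _ Hb). pose proof (sq_cj _ Ha). pose proof (sq_cj _ Hb).
  pose proof (Csub_nz _ _ Dab). pose proof (Csub_nz _ _ (not_eq_sym Dab)).
  unfold proj; autorewrite with cconj; rewrite (U_cj _ Ha), (U_cj _ Hb); fld.
Qed.

Lemma proj_dec a b x : a <> b -> x = proj a b x + proj b a x.
Proof. intro D. pose proof (Csub_nz _ _ D). pose proof (Csub_nz _ _ (not_eq_sym D)).
  unfold proj; fld. Qed.

Lemma axis_sum_conj a r r' : Cconj r = r / a -> Cconj r' = r' / a -> Cconj (r + r') = (r + r') / a.
Proof. intros. rewrite Cconj_add, H, H0. unfold Cdiv. ring. Qed.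
Lemma axis_opp_conj a r : Cconj r = r / a -> Cconj (- r) = (- r) / a.
Proof. intros. rewrite Cconj_opp, H. unfold Cdiv. ring. Qed.

Lemma RU_add3 ua ub uc x y : U ua -> U ub -> U uc ->
  ua * ua <> ub * ub -> ua * ua <> uc * uc -> ub * ub <> uc * uc ->
  RU U x -> RU U y -> RU U (x + y).
Proof.
  intros Ha Hb Hc Dab Dac Dbc Hx Hy.
  set (a := ua * ua) in *. set (b := ub * ub) in *.
  replace (x + y) with ((proj a b x + proj a b y) + (proj b a x + proj b a y)).
  2:{ rewrite (proj_dec a b x Dab) at 3. rewrite (proj_dec a b y Dab) at 3. ring. }
  apply (axis_comb ua ub); auto.
  - apply (axis_add ua ub uc); auto; try apply proj_RU; auto; apply proj_axis; auto.
  - apply (axis_add ub ua uc); auto; try apply proj_RU; auto; apply proj_axis; auto.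
  - apply axis_sum_conj; apply proj_axis; auto.
  - apply axis_sum_conj; apply proj_axis; auto.
Qed.

Lemma RU_opp3 ua ub uc x : U ua -> U ub -> U uc ->
  ua * ua <> ub * ub -> ua * ua <> uc * uc -> ub * ub <> uc * uc ->
  RU U x -> RU U (- x).
Proof.
  intros Ha Hb Hc Dab Dac Dbc Hx.
  set (a := ua * ua) in *. set (b := ub * ub) in *.
  replace (- x) with ((- proj a b x) + (- proj b a x)).
  2:{ rewrite (proj_dec a b x Dab) at 3. ring. }
  apply (axis_comb ua ub); auto.
  - apply (axis_opp ua ub uc); auto; try apply proj_RU; auto; apply proj_axis; auto.
  - apply (axis_opp ub ua uc); auto; try apply proj_RU; auto; apply proj_axis; auto.
  - apply axis_opp_conj; apply proj_axis; auto.
  - apply axis_opp_conj; apply proj_axis; auto.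
Qed.

Hypothesis H3 : at_least_three_angles U.

Lemma RU_add x y : RU U x -> RU U y -> RU U (x + y).
Proof.
  destruct H3 as (u1 & u2 & u3 & H1 & H2 & H3' & D12 & D13 & D23).
  apply (RU_add3 u1 u2 u3); auto; apply sq_of_dist; auto.
Qed.

Lemma RU_opp x : RU U x -> RU U (- x).
Proof.
  destruct H3 as (u1 & u2 & u3 & H1 & H2 & H3' & D12 & D13 & D23).
  apply (RU_opp3 u1 u2 u3); auto; apply sq_of_dist; auto.
Qed.

Lemma RtoC_mul r t : RtoC (r * t)%R = RtoC r * RtoC t.
Proof. apply Cx_eq; simpl; ring. Qed.

Lemma RU_scale l d : U d -> RU U l -> l = d * d * Cconj l -> forall x, RU U x -> RU U (l * x).
Proof.
  intros Hd Hl El x Hx. pose proof (U_nz _ Hd) as Nd.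
  assert (Ct : Cconj (l * Cconj d) = l * Cconj d).
  { assert (Cl : Cconj l = l / (d * d)) by (rewrite El at 2; fld).
    rewrite Cconj_mul, Cconj_conj, Cl, (U_cj _ Hd). fld. }
  induction Hx as [| | p q u v z Hp IHp Hq IHq Hu Hv Duv Lp Lq].
  - replace (l * C0) with C0 by ring. constructor.
  - replace (l * C1) with l by ring. auto.
  - apply (RU_I U (l * p) (l * q) (u * d) (v * d)); auto; try apply U_mul; auto.
    + destruct Duv as [D1 D2]; split; intro E; [apply D1|apply D2];
      replace u with ((u * d) / d) by fld; rewrite E; fld.
    + destruct Lp as [r Hr]. exists (r * Re (Cmul l (Cconj d)))%R.
      rewrite RtoC_mul, <- (real_RtoC _ Ct), Hr, (U_cj _ Hd). fld.
    + destruct Lq as [r Hr]. exists (r * Re (Cmul l (Cconj d)))%R.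
      rewrite RtoC_mul, <- (real_RtoC _ Ct), Hr, (U_cj _ Hd). fld.
Qed.

Lemma gen_RU g : generator U g -> RU U g /\ exists d, U d /\ g = d * d * Cconj g.
Proof.
  intros (e & f & He & Hf & Nf & Eg).
  pose proof (U_nz _ He). pose proof (U_nz _ Hf).
  assert (N1 : C1 - f * f <> C0) by (apply Csub_nz; auto).
  assert (N2 : f * f - C1 <> C0) by (apply Csub_nz; auto).
  assert (Hd : U (e * Cconj f)) by (apply U_mul; auto; apply U_conj; auto).
  assert (D : e * e <> e * Cconj f * (e * Cconj f)).
  { rewrite (U_cj _ Hf). intro E. apply Nf.
    assert (F : f * f = (e * e) / (e * / f * (e * / f))) by fld.
    rewrite F, <- E. fld. }
  assert (Cg : Cconj g = (C1 - / e * / e) / (C1 - / f * / f)).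
  { rewrite Eg. autorewrite with cconj. rewrite (U_cj _ He), (U_cj _ Hf). reflexivity. }
  split.
  - apply (RU_I2 e (e * Cconj f) (e * e) (e * Cconj f * (e * Cconj f)) C1 C0 g He Hd
      eq_refl eq_refl D (RU_1 U) (RU_0 U)); rewrite Cg, Eg, ?(U_cj _ Hf), ?Cconj_C1, ?Cconj_C0;
      fld.
  - exists (e * Cconj f). split; auto. rewrite Cg, (U_cj _ Hf). rewrite Eg at 1. fld.
Qed.

Lemma gp_RU p : gen_prod U p -> forall x, RU U x -> RU U (x * p).
Proof.
  induction 1 as [|p g Hp IH Hg]; intros x Hx.
  - replace (x * C1) with x by ring. auto.
  - destruct (gen_RU g Hg) as [Rg (d & Hd & Ed)].
    replace (x * (p * g)) with (g * (x * p)) by ring.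
    apply (RU_scale g d); auto.
Qed.

Lemma zs_RU z : Zspan_prod U z -> RU U z.
Proof.
  induction 1 as [|x p Hx IH Hp|x p Hx IH Hp].
  - constructor.
  - apply RU_add; auto. replace p with (C1 * p) by ring. apply gp_RU; auto. constructor.
  - unfold Csub. apply RU_add; auto. apply RU_opp.
    replace p with (C1 * p) by ring. apply gp_RU; auto. constructor.
Qed.
End WithU.

Section WithU2.
Variable U : Cx -> Prop.
Hypothesis HU : angle_subgroup U.
Notation S := (Zspan_prod U).
Ltac fld := field; repeat split; first [assumption | apply (U_nz U HU); assumption].

Lemma S0 : S C0. Proof. constructor. Qed.
Lemma S_gp p : gen_prod U p -> S p.
Proof. intro H. replace p with (C0 + p) by ring. apply zs_add; auto; constructor. Qed.
Lemma S1 : S C1. Proof. apply S_gp; constructor. Qed.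
Lemma Sadd x y : S x -> S y -> S (x + y).
Proof. intros Hx Hy; induction Hy as [|y p Hy IH Hp|y p Hy IH Hp].
  - replace (x + C0) with x by ring; auto.
  - replace (x + (y + p)) with ((x + y) + p) by ring; apply zs_add; auto.
  - replace (x + (y - p)) with ((x + y) - p) by ring; apply zs_sub; auto.
Qed.
Lemma Sopp y : S y -> S (- y).
Proof. induction 1 as [|y p Hy IH Hp|y p Hy IH Hp].
  - replace (- C0) with C0 by ring; constructor.
  - replace (- (y + p)) with (- y - p) by ring; apply zs_sub; auto.
  - replace (- (y - p)) with (- y + p) by ring; apply zs_add; auto.
Qed.
Lemma Ssub x y : S x -> S y -> S (x - y).
Proof. intros; unfold Csub; apply Sadd; auto; apply Sopp; auto. Qed.
Lemma gp_mul2 p q : gen_prod U p -> gen_prod U q -> gen_prod U (p * q).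
Proof. intros Hp Hq; induction Hq as [|q g Hq IH Hg].
  - replace (p * C1) with p by ring; auto.
  - replace (p * (q * g)) with ((p * q) * g) by ring; apply gp_mul; auto.
Qed.
Lemma Smul_gp x p : S x -> gen_prod U p -> S (x * p).
Proof. intros Hx Hp; induction Hx as [|x q Hx IH Hq|x q Hx IH Hq].
  - replace (C0 * p) with C0 by ring; constructor.
  - replace ((x + q) * p) with (x * p + q * p) by ring; apply zs_add; auto; apply gp_mul2; auto.
  - replace ((x - q) * p) with (x * p - q * p) by ring; apply zs_sub; auto; apply gp_mul2; auto.
Qed.
Lemma Smul x y : S x -> S y -> S (x * y).
Proof. intros Hx Hy; induction Hy as [|y p Hy IH Hp|y p Hy IH Hp].
  - replace (x * C0) with C0 by ring; constructor.
  - replace (x * (y + p)) with (x * y + x * p) by ring; apply Sadd; auto; apply Smul_gp; auto.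
  - replace (x * (y - p)) with (x * y - x * p) by ring; apply Ssub; auto; apply Smul_gp; auto.
Qed.
Lemma Sgen g : generator U g -> S g.
Proof. intro H. apply S_gp. replace g with (C1 * g) by ring. apply gp_mul; auto; constructor. Qed.

Lemma SV u : U u -> S (u * u).
Proof.
  intro Hu. destruct (classic (u * u = C1)) as [E|E].
  - rewrite E; apply S1.
  - assert (N : C1 - u * u <> C0) by (apply Csub_nz; auto).
    assert (G : S (C1 + u * u)).
    { apply Sgen. exists (u * u), u. repeat split; auto.
      - apply (U_mul U HU); auto.
      - fld. }
    replace (u * u) with ((C1 + u * u) - C1) by ring. apply Ssub; auto; apply S1.
Qed.

Lemma conj_gen g : generator U g -> S (Cconj g).
Proof.
  intros (e & f & He & Hf & Nf & Eg).
  assert (N1 : C1 - f * f <> C0) by (apply Csub_nz; auto).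
  assert (N2 : f * f - C1 <> C0) by (apply Csub_nz; auto).
  pose proof (U_nz U HU _ He). pose proof (U_nz U HU _ Hf).
  replace (Cconj g) with ((f * Cconj e) * (f * Cconj e) * g).
  - apply Smul. apply SV. apply (U_mul U HU); auto. apply (U_conj U HU); auto.
    apply Sgen; exists e, f; auto.
  - rewrite Eg. autorewrite with cconj. rewrite (U_cj U HU _ He), (U_cj U HU _ Hf). fld.
Qed.

Lemma Sconj_gp p : gen_prod U p -> S (Cconj p).
Proof. induction 1 as [|p g Hp IH Hg].
  - rewrite Cconj_C1; apply S1.
  - rewrite Cconj_mul. apply Smul; auto. apply conj_gen; auto.
Qed.

Lemma Sconj x : S x -> S (Cconj x).
Proof. induction 1 as [|x p Hx IH Hp|x p Hx IH Hp].
  - rewrite Cconj_C0; constructor.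
  - rewrite Cconj_add; apply Sadd; auto; apply Sconj_gp; auto.
  - rewrite Cconj_sub; apply Ssub; auto; apply Sconj_gp; auto.
Qed.

Definition Qp w := forall ua uc ud, U ua -> U uc -> U ud -> uc * uc <> ud * ud ->
  S ((w - ua * ua * Cconj w) / (uc * uc - ud * ud)).

Lemma Q1 : Qp C1.
Proof.
  intros ua uc ud Ha Hc Hd D. rewrite Cconj_C1.
  pose proof (U_nz U HU _ Ha). pose proof (U_nz U HU _ Hc). pose proof (U_nz U HU _ Hd).
  pose proof (Csub_nz _ _ D).
  assert (D' : ud * Cconj uc * (ud * Cconj uc) <> C1).
  { rewrite (U_cj U HU _ Hc). intro E. apply D.
    assert (F : ud * ud = (ud * / uc * (ud * / uc)) * (uc * uc)) by fld.
    rewrite F, E. ring. }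
  assert (N : C1 - ud * Cconj uc * (ud * Cconj uc) <> C0) by (apply Csub_nz; auto).
  replace ((C1 - ua * ua * C1) / (uc * uc - ud * ud)) with
    ((Cconj uc * Cconj uc) * ((C1 - ua * ua) / (C1 - ud * Cconj uc * (ud * Cconj uc)))).
  - apply Smul. apply SV, (U_conj U HU); auto.
    apply Sgen. exists ua, (ud * Cconj uc). repeat split; auto.
    apply (U_mul U HU); auto; apply (U_conj U HU); auto.
  - revert N. rewrite (U_cj U HU _ Hc). intro N. fld.
Qed.

Lemma Qgen g : generator U g -> Qp g.
Proof.
  intros Hg ua uc ud Ha Hc Hd D. destruct Hg as (e & f & He & Hf & Nf & Eg).
  assert (N1 : C1 - f * f <> C0) by (apply Csub_nz; auto).
  assert (N2 : f * f - C1 <> C0) by (apply Csub_nz; auto).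
  pose proof (U_nz U HU _ He). pose proof (U_nz U HU _ Hf). pose proof (Csub_nz _ _ D).
  pose proof (U_nz U HU _ Hc). pose proof (U_nz U HU _ Hd).
  assert (Hh : U (ua * f * Cconj e)).
  { apply (U_mul U HU); [apply (U_mul U HU)|apply (U_conj U HU)]; auto. }
  pose proof (Q1 _ _ _ Hh Hc Hd D) as Q. rewrite Cconj_C1 in Q.
  replace ((g - ua * ua * Cconj g) / (uc * uc - ud * ud)) with
    (g * ((C1 - ua * f * Cconj e * (ua * f * Cconj e) * C1) / (uc * uc - ud * ud))).
  - apply Smul; auto. apply Sgen; exists e, f; auto.
  - rewrite Eg. autorewrite with cconj. rewrite (U_cj U HU _ He), (U_cj U HU _ Hf). fld.
Qed.

Lemma Qmul x g : S x -> S g -> Qp x -> Qp g -> Qp (x * g).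
Proof.
  intros Sx Sg Qx Qg ua uc ud Ha Hc Hd D.
  pose proof (Csub_nz _ _ D).
  replace ((x * g - ua * ua * Cconj (x * g)) / (uc * uc - ud * ud)) with
    (x * ((g - ua * ua * Cconj g) / (uc * uc - ud * ud)) +
     (ua * ua * Cconj g) * ((x - C1 * C1 * Cconj x) / (uc * uc - ud * ud))).
  - apply Sadd; apply Smul; auto.
    + apply Smul; [apply SV; auto | apply Sconj; auto].
    + apply Qx; auto. apply (U_1 U HU).
  - rewrite Cconj_mul. fld.
Qed.

Lemma Q_gp p : gen_prod U p -> Qp p.
Proof. induction 1 as [|p g Hp IH Hg]. apply Q1.
  apply Qmul; auto. apply S_gp; auto. apply Sgen; auto. apply Qgen; auto. Qed.

Lemma Q_S x : S x -> Qp x.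
Proof. induction 1 as [|x p Hx IH Hp|x p Hx IH Hp]; intros ua uc ud Ha Hc Hd D;
  pose proof (Csub_nz _ _ D).
  - replace ((C0 - ua * ua * Cconj C0) / (uc * uc - ud * ud)) with C0 by (rewrite Cconj_C0; fld).
    constructor.
  - replace ((x + p - ua * ua * Cconj (x + p)) / (uc * uc - ud * ud)) with
      ((x - ua * ua * Cconj x) / (uc * uc - ud * ud) + (p - ua * ua * Cconj p) / (uc * uc - ud * ud))
      by (rewrite Cconj_add; fld).
    apply Sadd; [apply IH | apply (Q_gp p Hp)]; auto.
  - replace ((x - p - ua * ua * Cconj (x - p)) / (uc * uc - ud * ud)) with
      ((x - ua * ua * Cconj x) / (uc * uc - ud * ud) - (p - ua * ua * Cconj p) / (uc * uc - ud * ud))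
      by (rewrite Cconj_sub; fld).
    apply Ssub; [apply IH | apply (Q_gp p Hp)]; auto.
Qed.

Lemma solve2 a b p P q Q z Z : a <> b -> z - p = a * (Z - P) -> z - q = b * (Z - Q) ->
  z = (p - a * P) + a * Q + a * (((p - q) - a * (P - Q)) / (b - a)).
Proof.
  intros D E1 E2. pose proof (Csub_nz _ _ (not_eq_sym D)).
  assert (H1 : (b - a) * z = b * p - a * q + a * b * (Q - P)).
  { replace ((b - a) * z) with (b * (z - p) - a * (z - q) + b * p - a * q) by ring.
    rewrite E1, E2. ring. }
  replace z with (((b - a) * z) / (b - a)) at 1 by (field; auto).
  rewrite H1. field; auto.
Qed.

Lemma RU_S z : RU U z -> S z.
Proof.
  induction 1 as [| | p q u v z Hp IHp Hq IHq Hu Hv Duv Lp Lq].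
  - constructor.
  - apply S1.
  - pose proof (line_eq _ _ _ (U_T U HU _ Hu) Lp) as E1.
    pose proof (line_eq _ _ _ (U_T U HU _ Hv) Lq) as E2.
    pose proof (sq_of_dist u v Duv) as D.
    rewrite (solve2 _ _ _ _ _ _ _ _ D E1 E2).
    apply Sadd; [apply Sadd|].
    + apply Ssub; auto. apply Smul; [apply SV; auto | apply Sconj; auto].
    + apply Smul; [apply SV; auto | apply Sconj; auto].
    + apply Smul; [apply SV; auto|].
      rewrite <- Cconj_sub. apply (Q_S (p - q)); auto. apply Ssub; auto.
Qed.
End WithU2.

Theorem theorem1 (U : Cx -> Prop) :
  angle_subgroup U -> at_least_three_angles U ->
  (RU U C0 /\ RU U C1 /\
   (forall x y, RU U x -> RU U y -> RU U (Cadd x y)) /\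
   (forall x, RU U x -> RU U (Copp x)) /\
   (forall x y, RU U x -> RU U y -> RU U (Cmul x y))) /\
  (forall z, RU U z <-> Zspan_prod U z).
Proof.
  intros HU H3.
  split; [|intro z; split; [apply RU_S; auto | apply zs_RU; auto]].
  split; [constructor|split; [constructor|split; [|split]]].
  - intros; apply RU_add; auto.
  - intros; apply RU_opp; auto.
  - intros x y Hx Hy. apply (RU_S U HU) in Hy.
    induction Hy as [|y p Hy IH Hp|y p Hy IH Hp].
    + replace (x * C0) with C0 by ring. constructor.
    + replace (x * (y + p)) with (x * y + x * p) by ring.
      apply RU_add; auto. apply gp_RU; auto.
    + replace (x * (y - p)) with (x * y + - (x * p)) by (unfold Csub; ring).
      apply RU_add; auto. apply RU_opp; auto. apply gp_RU; auto.
Qed.
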